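(* Consider the gGASP instance with players $N=\{1,2,3\}$, non-void activities $A^*=\{a,b,c\}$, links $L=\{\{1,2\},\{2,3\}\}$ (a path), and preferences (listing only approved alternatives and $(a_\emptyset,1)$; all unlisted alternatives are ranked strictly below $(a_\emptyset,1)$): player 1: $(b,2)\succ(a,1)\succ(c,3)\succ(c,2)\succ(c,1)\succ(a_\emptyset,1)$; player 2: $(c,3)\succ(c,2)\succ(a,2)\succ(b,2)\succ(b,1)\succ(a_\emptyset,1)$; player 3: $(c,3)\succ(a,2)\succ(a,1)\succ(a_\emptyset,1)$. Then this instance admits no individually stable feasible assignment.
   Context: In a gGASP instance with players $N=[n]$, activities $A=A^*\cup\{a_\emptyset\}$ ($a_\emptyset$ the void activity), preferences $\succeq_i$ over $X=(A^*\times[n])\cup\{(a_\emptyset,1)\}$ and links $L$: a feasible assignment is a map $\pi:N\to A$ such that each $\pi^a=\{i:\pi(i)=a\}$, $a\in A^*$, is connected in $(N,L)$ (empty allowed). $\pi_i=\pi^{\pi(i)}$ if $\pi(i)\neq a_\emptyset$, else $\pi_i=\{i\}$. $\pi$ is individually rational if $(\pi(i),|\pi_i|)\succeq_i(a_\emptyset,1)$ for all $i$. Player $i$ has an NS-deviation to $a\in A^*\setminus\{\pi(i)\}$ if $\pi^a\cup\{i\}$ is connected and $(a,|\pi^a|+1)\succ_i(\pi(i),|\pi_i|)$; it is an IS-deviation if moreover $(a,|\pi^a|+1)\succeq_j(a,|\pi^a|)$ for all $j\in\pi^a$. $\pi$ is individually stable if it is individually rational and no player has an IS-deviation. *)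

(* Defs.v *)
From mathcomp Require Import all_boot.
Set Implicit Arguments. Unset Strict Implicit. Unset Printing Implicit Defensive.

(* Players: 'I_n (player k+1 of the paper is the ordinal k).
   Non-void activities: a finType A; an activity is [option A], None = a_void.
   Alternatives: [option (A * nat)], None = (a_void, 1), Some (a, k) = (a, k).
   The genuine alternative set X is given by [inX]. *)

Definition alt (A : Type) := option (A * nat).

Definition inX (n : nat) (A : Type) (x : alt A) : bool :=
  if x is Some (_, k) then (0 < k <= n) else true.

Definition strict (T : Type) (R : rel T) : rel T := fun x y => R x y && ~~ R y x.

Definition weak_order_on (n : nat) (A : Type) (R : rel (alt A)) : Prop :=
  (forall x y, inX n x -> inX n y -> R x y || R y x) /\
  (forall x y z, inX n x -> inX n y -> inX n z -> R x y -> R y z -> R x z).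

(* a set S of players is connected in the graph (N, L) (empty set allowed) *)
Definition connected_in (n : nat) (L : rel 'I_n) (S : {set 'I_n}) : bool :=
  [forall x in S, forall y in S,
     connect (fun u v => [&& L u v, u \in S & v \in S]) x y].

Section GASP.
Variables (n : nat) (A : finType).
Implicit Types (pi : 'I_n -> option A) (L : rel 'I_n)
               (pref : 'I_n -> rel (alt A)).

Definition coalition pi (a : A) : {set 'I_n} := [set i | pi i == Some a].

Definition coal_of pi (i : 'I_n) : {set 'I_n} :=
  if pi i is Some a then coalition pi a else [set i].

Definition cur_alt pi (i : 'I_n) : alt A :=
  if pi i is Some a then Some (a, #|coalition pi a|) else None.

Definition feasible L pi : Prop := forall a : A, connected_in L (coalition pi a).

Definition indiv_rational pref pi : Prop :=
  forall i, pref i (cur_alt pi i) None.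

Definition NS_deviation L pref pi (i : 'I_n) (a : A) : Prop :=
  [/\ pi i != Some a,
      connected_in L (i |: coalition pi a) &
      strict (pref i) (Some (a, #|coalition pi a|.+1)) (cur_alt pi i)].

Definition IS_deviation L pref pi (i : 'I_n) (a : A) : Prop :=
  NS_deviation L pref pi i a /\
  (forall j, j \in coalition pi a ->
     pref j (Some (a, #|coalition pi a|.+1)) (Some (a, #|coalition pi a|))).

Definition indiv_stable L pref pi : Prop :=
  indiv_rational pref pi /\ (forall i a, ~ IS_deviation L pref pi i a).

(* The preference of player i is a weak order on X in which the listed
   alternatives [l] (best first, ending with (a_void,1) = None) are strictly
   decreasing, and every unlisted alternative of X is strictly below None. *)
Definition pref_matches (R : rel (alt A)) (l : seq (alt A)) : Prop :=
  [/\ weak_order_on n R,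
      sorted (strict R) (rcons l None) &
      forall x, inX n x -> x \notin rcons l None -> strict R None x].
End GASP.

(* activities a, b, c are the ordinals 0, 1, 2 of 'I_3 *)
Definition act_a : 'I_3 := @Ordinal 3 0 isT.
Definition act_b : 'I_3 := @Ordinal 3 1 isT.
Definition act_c : 'I_3 := @Ordinal 3 2 isT.

(* links {1,2}, {2,3}: players 1,2,3 are ordinals 0,1,2 *)
Definition path_links : rel 'I_3 := fun u v =>
  [|| (nat_of_ord u == 0) && (nat_of_ord v == 1),
      (nat_of_ord u == 1) && (nat_of_ord v == 0),
      (nat_of_ord u == 1) && (nat_of_ord v == 2)
    | (nat_of_ord u == 2) && (nat_of_ord v == 1)].

(* listed approved alternatives, best first (None = (a_void,1) appended) *)
Definition list_of (i : 'I_3) : seq (alt 'I_3) :=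
  match nat_of_ord i with
  | 0 => [:: Some (act_b, 2); Some (act_a, 1); Some (act_c, 3);
             Some (act_c, 2); Some (act_c, 1)]
  | 1 => [:: Some (act_c, 3); Some (act_c, 2); Some (act_a, 2);
             Some (act_b, 2); Some (act_b, 1)]
  | _ => [:: Some (act_c, 3); Some (act_a, 2); Some (act_a, 1)]
  end.

(* Main.v *)
Require Import Defs.
From mathcomp Require Import all_boot.
From Stdlib Require Import FunctionalExtensionality.

Definition iX (x : alt 'I_3) : bool := inX 3 x.

Section Gen.
Variable (R : rel (alt 'I_3)) (l : seq (alt 'I_3)).
Hypothesis HR : pref_matches 3 R l.
Hypothesis Hl : all iX l.
Hypothesis HN : None \notin l.

Lemma strict_trans x y z : inX 3 x -> inX 3 y -> inX 3 z ->
  strict R x y -> strict R y z -> strict R x z.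
Proof.
case: HR => [[_ tr] _ _] hx hy hz /andP[xy nyx] /andP[yz nzy].
apply/andP; split; first exact: (tr x y z).
apply/negP => zx; move/negP: nzy; apply; exact: (tr z x y).
Qed.

Lemma rank_strict x y : inX 3 x -> inX 3 y ->
  index x (rcons l None) < index y (rcons l None) -> strict R x y.
Proof.
move=> hx hy hlt.
have Hs : all iX (rcons l None) by rewrite all_rcons Hl.
case: HR => [wo so lo].
have key : {in rcons l None &, forall u v,
   index u (rcons l None) < index v (rcons l None) -> strict R u v}.
  apply: sorted_ltn_index_in => //.
  move=> b a c ha hb hc; apply: strict_trans;
    by move/allP: Hs; apply.
have xs : x \in rcons l None.
  by rewrite -index_mem (leq_trans hlt) // index_size.
case ys : (y \in rcons l None); first exact: key.
case: (eqVneq x None) => [->|xN]; first by apply: lo => //; rewrite ys.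
apply: (@strict_trans x None y) => //; last by apply: lo => //; rewrite ys.
apply: key => //; first by rewrite mem_rcons inE.
move: xs; rewrite mem_rcons inE (negbTE xN) /= => xl.
by rewrite -cats1 !index_cat xl (negbTE HN) /= ?eqxx ?addn0 index_mem.
Qed.
End Gen.

Definition ords : seq 'I_3 := [:: act_a; act_b; act_c].

Lemma ords_all (i : 'I_3) : [\/ i = act_a, i = act_b | i = act_c].
Proof.
case: i => [[|[|[|k]]] Hk].
- by constructor 1; apply: val_inj.
- by constructor 2; apply: val_inj.
- by constructor 3; apply: val_inj.
- by [].
Qed.

Lemma mem_ords (i : 'I_3) : i \in ords.
Proof. by case: (ords_all i) => ->. Qed.

Lemma card_count (P : pred 'I_3) : #|[set j | P j]| = count P ords.
Proof.
rewrite cardsE cardE /enum_mem size_filter.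
have pe : perm_eq (Finite.enum 'I_3) ords.
  apply: uniq_perm; first by rewrite -enumT enum_uniq. by [].
  by move=> x; rewrite -enumT mem_enum mem_ords.
by rewrite (permP pe).
Qed.

Definition connB (m : 'I_3 -> bool) : bool := ~~ [&& m act_a, m act_c & ~~ m act_b].

Lemma connected_iff (S : {set 'I_3}) :
  connected_in path_links S = connB (fun j => j \in S).
Proof.
rewrite /connB; apply/idP/idP.
- move=> /forallP H; apply/negP => /and3P[h0 h2 h1].
  move: (H act_a); rewrite h0 /= => /forallP /(_ act_c); rewrite h2 /=.
  case/connectP => [[|x p]] /=; first by move=> _ /(congr1 val).
  move=> /andP[/and3P[e _ xS] _] _.
  have xb : x = act_b.
    by case: (ords_all x) e => ->.
  by move: h1; rewrite -xb xS.
- move=> H; apply/forallP => x; apply/implyP => xS; apply/forallP => y; apply/implyP => yS.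
  have e01 : forall u v, u \in S -> v \in S -> path_links u v ->
    connect (fun u v => [&& path_links u v, u \in S & v \in S]) u v.
    by move=> u v uS vS uv; apply: connect1; rewrite uv uS vS.
  have bS : act_a \in S -> act_c \in S -> act_b \in S.
    by move=> a c; move: H; rewrite a c /= negbK.
  case: (ords_all x) => ->{x} in xS *; case: (ords_all y) => ->{y} in yS *;
    try exact: connect0; try (apply: e01 => //; done).
  + apply: connect_trans (e01 _ _ xS (bS xS yS) _) (e01 _ _ (bS xS yS) yS _) => //.
  + apply: connect_trans (e01 _ _ xS (bS yS xS) _) (e01 _ _ (bS yS xS) yS _) => //.
Qed.

Definition rk (i : 'I_3) (v : alt 'I_3) := index v (rcons (list_of i) None).
Definition better i u v := [&& iX u, iX v & rk i u < rk i v].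
Definition cnt (p : 'I_3 -> option 'I_3) a := count (fun j => p j == Some a) ords.
Definition cur' (p : 'I_3 -> option 'I_3) i : alt 'I_3 :=
  if p i is Some a then Some (a, cnt p a) else None.

Definition refut (p : 'I_3 -> option 'I_3) : bool :=
 [|| has (fun a => ~~ connB (fun j => p j == Some a)) ords,
     has (fun i => better i None (cur' p i)) ords |
     has (fun i => has (fun a => [&& p i != Some a,
        connB (fun j => (j == i) || (p j == Some a)),
        better i (Some (a, (cnt p a).+1)) (cur' p i) &
        all (fun j => (p j == Some a) ==> better j (Some (a, (cnt p a).+1)) (Some (a, cnt p a))) ords])
       ords) ords].

Definition mkp (x y z : option 'I_3) (i : 'I_3) : option 'I_3 :=
  match val i with 0 => x | 1 => y | _ => z end.

Definition opts : seq (option 'I_3) := None :: map Some ords.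

Lemma check_all : all (fun x => all (fun y => all (fun z => refut (mkp x y z)) opts) opts) opts.
Proof. vm_compute. reflexivity. Qed.

Lemma cardC (p : 'I_3 -> option 'I_3) a : #|coalition p a| = cnt p a.
Proof. by rewrite /coalition card_count. Qed.

Lemma curC p i : cur_alt p i = cur' p i.
Proof. by rewrite /cur_alt /cur'; case: (p i) => // a; rewrite cardC. Qed.

Lemma better_strict (pref : 'I_3 -> rel (alt 'I_3)) :
  (forall i : 'I_3, pref_matches 3 (pref i) (list_of i)) ->
  forall i u v, better i u v -> strict (pref i) u v.
Proof.
move=> Hp i u v /and3P[hu hv hr]; apply: rank_strict => //.
- by case: (ords_all i) => ->.
- by case: (ords_all i) => ->.
Qed.

Lemma sound (pref : 'I_3 -> rel (alt 'I_3)) (p : 'I_3 -> option 'I_3) :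
  (forall i : 'I_3, pref_matches 3 (pref i) (list_of i)) ->
  refut p -> ~ (feasible path_links p /\ indiv_stable path_links pref p).
Proof.
move=> Hp /or3P[] H [Hf [Hir His]].
- case/hasP: H => a _; move: (Hf a); rewrite connected_iff /connB !inE => C NC.
  by rewrite C in NC.
- case/hasP: H => i _ /(@better_strict pref Hp) /andP[_].
  by move: (Hir i); rewrite curC => ->.
- case/hasP: H => i _ /hasP[a _ /and4P[h1 h2 h3 /allP h4]].
  apply: (His i a); split; first split.
  + exact: h1.
  + rewrite connected_iff; move: h2; rewrite /connB.
    by rewrite !inE.
  + by rewrite curC cardC; exact: @better_strict pref Hp _ _ _ h3.
  + move=> j; rewrite inE => hj; rewrite cardC.
    by have /andP[] := @better_strict pref Hp _ _ _ (implyP (h4 j (mem_ords j)) hj).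
Qed.

Theorem mainTheorem4 (pref : 'I_3 -> rel (alt 'I_3)) :
  (forall i : 'I_3, pref_matches 3 (pref i) (list_of i)) ->
  ~ exists pi : 'I_3 -> option 'I_3,
      feasible path_links pi /\ indiv_stable path_links pref pi.
Proof.
move=> Hp [pi Hpi].
have E : pi = mkp (pi act_a) (pi act_b) (pi act_c).
  apply: functional_extensionality => i.
  by case: (ords_all i) => ->.
apply: (@sound pref pi Hp _ Hpi); rewrite E.
have := check_all.
have oa : forall o : option 'I_3, o \in opts.
  by case=> [o|] //; case: (ords_all o) => ->.
move/allP/(_ _ (oa (pi act_a)))/allP/(_ _ (oa (pi act_b)))/allP/(_ _ (oa (pi act_c))).
by [].
Qed.
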